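(* Let $c_1,\dots,c_s\in\{\pm1\}^n$ with $c_i=(c_{i,1},\dots,c_{i,n})$, let $\sigma=\sum_{i=1}^s c_i=(\sigma_1,\dots,\sigma_n)$, and for $i\in\{0,\dots,s\}$ let $A_i=\{j\in[n]:\sigma_j=s-2i\}$. Then for every $i\in\{1,\dots,\lfloor s/2\rfloor\}$ and every set $\mathcal{B}\subseteq A_i$ of size $\lfloor s\rfloor_i$, there exists $j\in[s]$ such that $c_{j,b}=1$ for all $b\in\mathcal{B}$. Similarly, for every $i\in\{\lfloor s/2\rfloor+1,\dots,s-1\}$ and every set $\mathcal{D}\subseteq A_i$ of size $\lfloor s\rfloor_{s-i}$, there exists $j\in[s]$ such that $c_{j,d}=-1$ for all $d\in\mathcal{D}$.
   Context: Sums are real sums. For positive integers $s,i$, $\lfloor s\rfloor_i$ denotes the largest integer $q$ such that $iq<s$ (e.g. $\lfloor 6\rfloor_2=2$); $\lfloor s/2\rfloor$ is the usual floor. *)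

(* Defs.v *)
From mathcomp Require Import all_boot all_order all_algebra.
Set Implicit Arguments. Unset Strict Implicit. Unset Printing Implicit Defensive.
Import Order.TTheory GRing.Theory Num.Theory.

(* floor_sub s i = largest integer q (q >= 0) with i * q < s.
   For i >= 1 every such q satisfies q < s, so the max over q <= s is exact. *)
Definition floor_sub (s i : nat) : nat := \max_(q < s.+1 | i * q < s) q.

Definition sigma (s n : nat) (c : 'I_s -> 'I_n -> int) (b : 'I_n) : int :=
  (\sum_(k < s) c k b)%R.

Definition Aset (s n : nat) (c : 'I_s -> 'I_n -> int) (i : nat) : {set 'I_n} :=
  [set b | sigma c b == (s%:Z - (2 * i)%:Z)%R].

(* Main.v *)
Require Import Defs.
From mathcomp Require Import all_boot all_order all_algebra.
From mathcomp Require Import zify ring lra.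
Import Order.TTheory GRing.Theory Num.Theory.

Lemma pig (s n : nat) (P : 'I_s -> 'I_n -> bool) (B : {set 'I_n}) m :
  (forall b, b \in B -> #|[set k | P k b]| <= m) -> m * #|B| < s ->
  exists j : 'I_s, forall b, b \in B -> ~~ P j b.
Proof.
move=> hB hs.
case: (boolP [exists j, [forall b in B, ~~ P j b]]).
  by case/existsP=> j /forall_inP H; exists j.
rewrite negb_exists => /forallP H.
suff: s <= m * #|B| by rewrite leqNgt hs.
have e1 : s = \sum_(j : 'I_s) 1 by rewrite sum1_card card_ord.
rewrite {1}e1.
apply: (@leq_trans (\sum_(j : 'I_s) \sum_(b in B) (P j b : nat))).
  apply: leq_sum => j _.
  move: (H j); rewrite negb_forall => /existsP [b].
  rewrite negb_imply negbK => /andP [bB Pjb].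
  by rewrite (bigD1 b) //= Pjb leq_addr.
have E : \sum_(j < s) \sum_(b in B) (P j b : nat) = \sum_(b in B) \sum_(j < s) (P j b : nat).
  exact: exchange_big.
rewrite E (@leq_trans (\sum_(b in B) m)) //; last by rewrite sum_nat_const mulnC.
apply: leq_sum => b bB.
apply: leq_trans (hB b bB).
rewrite -sum1_card [X in _ <= X]big_mkcond /=.
by apply: leq_sum => j _; rewrite inE; case: (P j b).
Qed.

Lemma colsum (s n : nat) (c : 'I_s -> 'I_n -> int)
  (hc : forall k b, c k b = 1%R \/ c k b = (-1)%R) b :
  sigma c b = (#|[set k | c k b == 1%R]|%:Z - #|[set k | c k b != 1%R]|%:Z)%R
  /\ #|[set k | c k b == 1%R]| + #|[set k | c k b != 1%R]| = s.
Proof.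
split; last first.
  have := cardsC [set k | c k b == 1%R].
  rewrite card_ord => E; rewrite -[RHS]E; congr (_ + _); apply: eq_card => k; by rewrite !inE.
rewrite /sigma (bigID (fun k => c k b == 1%R)) /=.
rewrite (eq_bigr (fun _ => 1%R)); last by move=> k /eqP.
rewrite [X in (_ + X)%R](eq_bigr (fun _ => (-1)%R)); last first.
  by move=> k; case: (hc k b) => ->.
rewrite !sumr_const mulNrn !natz; congr (Posz _ - Posz _)%R; apply: eq_card => k; rewrite inE //.
Qed.

Lemma fs_lt s i : 0 < s -> i * floor_sub s i < s.
Proof.
move=> s0; rewrite /floor_sub.
apply: (big_ind (fun x => i * x < s)) => //.
  by rewrite muln0.
by move=> x y hx hy; case: (leqP x y) => h; rewrite ?(maxn_idPr h) ?(maxn_idPl (ltnW h)).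
Qed.

Theorem lemma2 (s n : nat) (c : 'I_s -> 'I_n -> int)
  (hc : forall k b, c k b = 1%R \/ c k b = (-1)%R) :
  (forall i : nat, 1 <= i <= s./2 ->
     forall B : {set 'I_n}, B \subset Aset c i -> #|B| = floor_sub s i ->
       exists j : 'I_s, forall b, b \in B -> c j b = 1%R)
  /\
  (forall i : nat, s./2 + 1 <= i <= s - 1 ->
     forall D : {set 'I_n}, D \subset Aset c i -> #|D| = floor_sub s (s - i) ->
       exists j : 'I_s, forall d, d \in D -> c j d = (-1)%R).
Proof.
have key : forall i b, b \in Aset c i ->
    #|[set k | c k b != 1%R]| = i /\ #|[set k | c k b == 1%R]| = s - i.
  move=> i b; rewrite inE => /eqP h.
  have [h1 h2] := @colsum s n c hc b.
  rewrite h1 in h.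
  move: h h2.
  move: #|[set k | c k b == 1%R]| #|[set k | c k b != 1%R]| => p q h h2.
  lia.
split.
  move=> i /andP [i1 i2] B sB cB.
  have s0 : 0 < s by lia.
  have H1 : forall b, b \in B -> #|[set k | (fun k b => c k b != 1%R) k b]| <= i.
    by move=> b bB; have [-> _] := key i b (subsetP sB b bB).
  have H2 : i * #|B| < s by rewrite cB; apply: fs_lt.
  have [j Hj] := @pig s n (fun k b => c k b != 1%R) B i H1 H2.
  by exists j => b bB; move: (Hj b bB); rewrite negbK => /eqP.
move=> i /andP [i1 i2] D sD cD.
have s0 : 0 < s by lia.
have H1 : forall b, b \in D -> #|[set k | (fun k b => c k b != (-1)%R) k b]| <= s - i.
  move=> b bB; have [_ <-] := key i b (subsetP sD b bB).
  rewrite leq_eqVlt; apply/orP; left; apply/eqP; apply: eq_card => k.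
  by rewrite !inE; case: (hc k b) => ->.
have H2 : (s - i) * #|D| < s by rewrite cD; apply: fs_lt.
have [j Hj] := @pig s n (fun k b => c k b != (-1)%R) D (s - i) H1 H2.
by exists j => b bB; move: (Hj b bB); rewrite negbK => /eqP.
Qed.
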